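(* For every integer $m\ge1$, as formal power series in $q$, \[ \frac{1}{(q;q)_{\infty}} \sum_{l=0}^{m-1}(-1)^{l} q^{\frac{l(3l+1)}{2}}(1-q^{2l+1})= 1+(-1)^{m-1}\sum_{d=1}^{\infty} \frac{q^{d^2+d+\binom{m}{2}}}{(q;q)_{2d}} \frac{1-q^m}{1-q^d}\begin{bmatrix}2d\\ d+m\end{bmatrix}_q \] and \[ \frac{1}{(q;q)_{\infty}} \sum_{l=0}^{m-1}(-1)^{l} q^{\frac{l(3l-1)}{2}}(1-q^{4l+2})= 1+(-1)^{m-1}\sum_{d=1}^{\infty} \frac{q^{d^2+\binom{m}{2}}}{(q;q)_{2d}} \frac{1-q^m}{1-q^d}\begin{bmatrix}2d\\ d+m\end{bmatrix}_q. \]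
   Context: Notation: $(a;q)_n=(1-a)(1-aq)\cdots(1-aq^{n-1})$, $(a;q)_\infty=\prod_{k\ge0}(1-aq^k)$, and $\begin{bmatrix}n\\k\end{bmatrix}_q=\frac{(q;q)_n}{(q;q)_k(q;q)_{n-k}}$ for $n\ge k\ge0$ and $0$ otherwise (so terms with $d<m$ vanish). *)

(* Defs.v *)
From mathcomp Require Import all_boot all_order all_algebra.
Set Implicit Arguments. Unset Strict Implicit. Unset Printing Implicit Defensive.
Import Order.TTheory GRing.Theory Num.Theory.
Local Open Scope ring_scope.

Definition fps := nat -> rat.

Definition fps_const (c : rat) : fps := fun n => if n == 0%N then c else 0.
Definition fps_one : fps := fps_const 1.
Definition fps_add (f g : fps) : fps := fun n => f n + g n.
Definition fps_sub (f g : fps) : fps := fun n => f n - g n.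
Definition fps_scale (c : rat) (f : fps) : fps := fun n => c * f n.
Definition fps_mul (f g : fps) : fps :=
  fun n => \sum_(i < n.+1) f i * g (n - i)%N.
Definition fps_pow (f : fps) (k : nat) : fps := iter k (fps_mul f) fps_one.
Definition qX (k : nat) : fps := fun n => if n == k then 1 else 0.
Definition fps_bigsum (F : nat -> fps) (N : nat) : fps :=
  fun n => \sum_(i < N) F i n.

(* Multiplicative inverse of a power series with nonzero constant term:
   writing f = f0 (1 - g) with g(0) = 0, 1/f = f0^-1 * sum_k g^k, and the
   coefficient of q^n only involves k <= n. *)
Definition fps_inv (f : fps) : fps :=
  let g := fps_sub fps_one (fps_scale (f 0%N)^-1 f) in
  fun n => (f 0%N)^-1 * \sum_(k < n.+1) fps_pow g k n.
Definition fps_div (f g : fps) : fps := fps_mul f (fps_inv g).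

Definition qpoch (n : nat) : fps :=
  foldr fps_mul fps_one [seq fps_sub fps_one (qX k.+1) | k <- iota 0 n].

(* (q;q)_oo : the coefficient of q^n of the infinite product equals that of
   the partial product (q;q)_n, since the remaining factors are
   congruent to 1 modulo q^(n+1). *)
Definition qpoch_inf : fps := fun n => qpoch n n.

Definition qbinom (n k : nat) : fps :=
  if (k <= n)%N then fps_div (qpoch n) (fps_mul (qpoch k) (qpoch (n - k)))
  else fun _ => 0.

Definition fps_series (F : nat -> fps) (S : fps) : Prop :=
  forall n, exists N, forall M, (N <= M)%N -> fps_bigsum F M n = S n.

Definition lhs1 (m : nat) : fps :=
  fps_div (fps_bigsum (fun l => fps_scale ((-1) ^+ l)
             (fps_mul (qX ((l * (3 * l + 1))./2)) (fps_sub fps_one (qX (2 * l + 1))))) m)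
          qpoch_inf.
Definition lhs2 (m : nat) : fps :=
  fps_div (fps_bigsum (fun l => fps_scale ((-1) ^+ l)
             (fps_mul (qX ((l * (3 * l - 1))./2)) (fps_sub fps_one (qX (4 * l + 2))))) m)
          qpoch_inf.

Definition term1 (m d : nat) : fps :=
  fps_mul (fps_div (qX (d ^ 2 + d + 'C(m, 2))) (qpoch (2 * d)))
    (fps_mul (fps_div (fps_sub fps_one (qX m)) (fps_sub fps_one (qX d)))
             (qbinom (2 * d) (d + m))).
Definition term2 (m d : nat) : fps :=
  fps_mul (fps_div (qX (d ^ 2 + 'C(m, 2))) (qpoch (2 * d)))
    (fps_mul (fps_div (fps_sub fps_one (qX m)) (fps_sub fps_one (qX d)))
             (qbinom (2 * d) (d + m))).

(* Main.v *)
Require Import Defs.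
From HB Require Import structures.
From mathcomp Require Import all_boot all_order all_algebra.
From mathcomp Require Import boolp.
From mathcomp Require Import ring zify.
Set Implicit Arguments. Unset Strict Implicit. Unset Printing Implicit Defensive.
Import Order.TTheory GRing.Theory Num.Theory.
Local Open Scope ring_scope.


Definition fpsR := fps.
HB.instance Definition _ := gen_eqMixin fpsR.
HB.instance Definition _ := gen_choiceMixin fpsR.

Definition fzero : fpsR := fun _ => 0.
Definition fopp (f : fpsR) : fpsR := fun n => - f n.
Definition fadd (f g : fpsR) : fpsR := fps_add f g.

Lemma faddA : associative fadd.
Proof. by move=> f g h; apply: funext => n; rewrite /fadd /fps_add addrA. Qed.
Lemma faddC : commutative fadd.
Proof. by move=> f g; apply: funext => n; rewrite /fadd /fps_add addrC. Qed.
Lemma fadd0 : left_id fzero fadd.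
Proof. by move=> f; apply: funext => n; rewrite /fadd /fps_add add0r. Qed.
Lemma faddN : left_inverse fzero fopp fadd.
Proof. by move=> f; apply: funext => n; rewrite /fadd /fps_add /fopp addNr. Qed.

HB.instance Definition _ := GRing.isZmodule.Build fpsR faddA faddC fadd0 faddN.

Definition tr (N : nat) (f : fps) : {poly rat} := \poly_(i < N.+1) f i.

Lemma fps_mul_tr N (f g : fps) j : (j <= N)%N ->
  fps_mul f g j = (tr N f * tr N g)`_j.
Proof.
move=> hj; rewrite coefM /fps_mul; apply: eq_bigr => i _.
rewrite !coef_poly; have hi : (i < N.+1)%N by apply: leq_trans (ltn_ord i) _; rewrite ltnS.
rewrite hi; have -> : (j - i < N.+1)%N by rewrite ltnS; apply: leq_trans (leq_subr _ _) hj.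
done.
Qed.

Lemma coefM_congr (p p' q q' : {poly rat}) n :
  (forall i, (i <= n)%N -> p`_i = p'`_i) -> (forall i, (i <= n)%N -> q`_i = q'`_i) ->
  (p * q)`_n = (p' * q')`_n.
Proof.
move=> hp hq; rewrite !coefM; apply: eq_bigr => i _.
rewrite hp ?hq ?leq_subr //; by rewrite -ltnS.
Qed.

Lemma fmulA : associative fps_mul.
Proof.
move=> f g h; apply: funext => n.
rewrite (fps_mul_tr _ _ (leqnn n)) [RHS](fps_mul_tr _ _ (leqnn n)).
transitivity ((tr n f * (tr n g * tr n h))`_n).
  apply: coefM_congr => // i hi; rewrite coef_poly ltnS hi (fps_mul_tr _ _ hi).
  apply: coefM_congr => k hk; rewrite !coef_poly !ltnS ?(leq_trans hk hi) //.
rewrite mulrA; apply: coefM_congr => // i hi; rewrite coef_poly ltnS hi (fps_mul_tr _ _ hi).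
apply: coefM_congr => k hk; rewrite !coef_poly !ltnS ?(leq_trans hk hi) //.
Qed.

Lemma fmulC : commutative fps_mul.
Proof.
move=> f g; apply: funext => n.
by rewrite (fps_mul_tr _ _ (leqnn n)) [RHS](fps_mul_tr _ _ (leqnn n)) mulrC.
Qed.

Lemma tr_one N : tr N fps_one = 1.
Proof.
apply/polyP => i; rewrite coef_poly coefC /fps_one /fps_const.
by case: i => [|i] //=; case: ifP.
Qed.

Lemma fmul1 : left_id fps_one fps_mul.
Proof.
move=> f; apply: funext => n; rewrite (fps_mul_tr _ _ (leqnn n)) tr_one mul1r.
by rewrite coef_poly ltnS leqnn.
Qed.

Lemma fmulDl : left_distributive fps_mul fadd.
Proof.
move=> f g h; apply: funext => n; rewrite /fadd /fps_add /fps_mul -big_split /=.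
by apply: eq_bigr => i _; rewrite mulrDl.
Qed.

Lemma fone_neq0 : fps_one != fzero :> fpsR.
Proof.
apply/eqP => /(congr1 (fun f : fpsR => f 0%N)); rewrite /fps_one /fps_const /fzero /=.
by move/eqP; rewrite oner_eq0.
Qed.

HB.instance Definition _ := GRing.Zmodule_isComNzRing.Build fpsR fmulA fmulC fmul1 fmulDl fone_neq0.

Lemma fpsE0 n : (0 : fpsR) n = 0. Proof. by []. Qed.
Lemma fpsED (f g : fpsR) n : (f + g) n = f n + g n. Proof. by []. Qed.
Lemma fpsEN (f : fpsR) n : (- f) n = - f n. Proof. by []. Qed.
Lemma fpsEB (f g : fpsR) n : (f - g) n = f n - g n. Proof. by []. Qed.
Lemma fpsE1 n : (1 : fpsR) n = (n == 0%N)%:R. Proof. by case: n. Qed.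
Lemma fpsEM (f g : fpsR) n : (f * g) n = \sum_(i < n.+1) f i * g (n - i)%N. Proof. by []. Qed.
Lemma fps_sum_coef I (r : seq I) (P : pred I) (F : I -> fpsR) n :
  (\sum_(i <- r | P i) F i) n = \sum_(i <- r | P i) F i n.
Proof. by elim/big_rec2: _ => // i y1 y2 _ <-. Qed.


Definition eqto (n : nat) (f g : fpsR) := forall i, (i <= n)%N -> f i = g i.
Definition ordge (a : nat) (f : fpsR) := forall i, (i < a)%N -> f i = 0.

Lemma eqto_mul n (a a' b b' : fpsR) : eqto n a a' -> eqto n b b' -> eqto n (a * b) (a' * b').
Proof.
move=> ha hb i hi; rewrite !fpsEM; apply: eq_bigr => j _.
have hj : (j <= n)%N by apply: leq_trans hi; rewrite -ltnS.
by rewrite ha // hb // (leq_trans (leq_subr _ _) hi).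
Qed.

Lemma eqto_ordge n (f g : fpsR) : ordge n.+1 (f - g) -> eqto n f g.
Proof. by move=> h i hi; apply/eqP; rewrite -subr_eq0 -fpsEB h. Qed.

Lemma ordge_eqto n (f g : fpsR) : eqto n f g -> ordge n.+1 (f - g).
Proof. by move=> h i hi; rewrite fpsEB h ?subrr. Qed.

Lemma ordge_le a b (f : fpsR) : (b <= a)%N -> ordge a f -> ordge b f.
Proof. by move=> hab h i hi; apply: h; apply: leq_trans hab. Qed.

Lemma ordge0 a : ordge a 0. Proof. by []. Qed.
Lemma ordgeD a (f g : fpsR) : ordge a f -> ordge a g -> ordge a (f + g).
Proof. by move=> hf hg i hi; rewrite fpsED hf ?hg ?addr0. Qed.
Lemma ordgeN a (f : fpsR) : ordge a f -> ordge a (- f).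
Proof. by move=> hf i hi; rewrite fpsEN hf ?oppr0. Qed.
Lemma ordgeB a (f g : fpsR) : ordge a f -> ordge a g -> ordge a (f - g).
Proof. by move=> hf hg; apply: ordgeD => //; apply: ordgeN. Qed.
Lemma ordge_sum a I (r : seq I) (P : pred I) (F : I -> fpsR) :
  (forall i, P i -> ordge a (F i)) -> ordge a (\sum_(i <- r | P i) F i).
Proof. by move=> h; elim/big_rec: _ => // i x Pi hx; apply: ordgeD => //; apply: h. Qed.

Lemma ordgeM a b (f g : fpsR) : ordge a f -> ordge b g -> ordge (a + b) (f * g).
Proof.
move=> hf hg n hn; rewrite fpsEM big1 // => i _.
case: (ltnP i a) => hia; first by rewrite hf ?mul0r.
rewrite hg ?mulr0 //; have := ltn_ord i; lia.
Qed.
Lemma ordgeMl a (f g : fpsR) : ordge a g -> ordge a (f * g).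
Proof. by move=> hg; rewrite -[a]add0n; apply: ordgeM. Qed.
Lemma ordgeMr a (f g : fpsR) : ordge a f -> ordge a (f * g).
Proof. by move=> hf; rewrite -[a]addn0; apply: ordgeM. Qed.
Lemma ordgeX a k (f : fpsR) : ordge a f -> ordge (a * k) (f ^+ k).
Proof.
move=> hf; elim: k => [|k ih]; first by rewrite muln0.
by rewrite exprS mulnS; apply: ordgeM.
Qed.

Lemma qXE k n : qX k n = (n == k)%:R.
Proof. by rewrite /qX; case: (n == k). Qed.

Lemma qXM a (f : fpsR) n : ((qX a : fpsR) * f) n = if (a <= n)%N then f (n - a)%N else 0.
Proof.
rewrite fpsEM; case: (leqP a n) => han.
  have ha : (a < n.+1)%N by [].
  rewrite (bigD1 (Ordinal ha)) //= qXE eqxx mul1r big1 ?addr0 // => i /negbTE hi.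
  rewrite qXE; suff -> : (val i == a) = false by rewrite mul0r.
  by apply: contraFF hi => /eqP hia; apply/eqP; apply: val_inj.
rewrite big1 // => i _; rewrite qXE.
suff -> : (val i == a) = false by rewrite mul0r.
apply/negbTE; rewrite neq_ltn; apply/orP; left.
by apply: leq_trans (ltn_ord i) _.
Qed.

Lemma ordge_qX a : ordge a (qX a).
Proof. by move=> i hi; rewrite qXE; case: eqP hi => // ->; rewrite ltnn. Qed.

Lemma qXD a b : qX (a + b) = (qX a : fpsR) * qX b.
Proof.
apply: funext => n; rewrite qXM !qXE; case: (leqP a n) => h;
 [case: (n - a == b)%N /eqP => e1|]; case: (n == a + b)%N /eqP => e2 //; exfalso; lia.
Qed.

Lemma qX0 : qX 0 = 1 :> fpsR.
Proof. by apply: funext => n; rewrite qXE fpsE1. Qed.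

Lemma qXS a : qX a.+1 = (qX a : fpsR) * qX 1.
Proof. by rewrite -qXD addn1. Qed.

Definition fconst (c : rat) : fpsR := fps_const c.
Lemma fconstM c (f : fpsR) n : (fconst c * f) n = c * f n.
Proof.
rewrite fpsEM big_ord_recl /= subn0 big1 ?addr0 // => i _.
by rewrite /fconst /fps_const /= mul0r.
Qed.
Lemma fps_scaleE c (f : fpsR) : fps_scale c f = fconst c * f.
Proof. by apply: funext => n; rewrite fconstM. Qed.
Lemma fconst_mul a b : fconst a * fconst b = fconst (a * b).
Proof.
apply: funext => n; rewrite fconstM /fconst /fps_const; case: (n == 0%N) => //; by rewrite mulr0.
Qed.
Lemma fconst1 : fconst 1 = 1.
Proof. by apply: funext => n; rewrite fpsE1 /fconst /fps_const; case: (n == 0%N). Qed.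

Lemma fpsM0 (f g : fpsR) : (f * g) 0%N = f 0%N * g 0%N.
Proof. by rewrite fpsEM big_ord_recl big_ord0 addr0. Qed.

Lemma fps_pow_exp (g : fpsR) k : fps_pow g k = g ^+ k.
Proof. by elim: k => [|k ih] //=; rewrite exprS -ih. Qed.

Lemma geom (x : fpsR) n : (1 - x) * \sum_(k < n) x ^+ k = 1 - x ^+ n.
Proof.
elim: n => [|n ih]; first by rewrite big_ord0 mulr0 expr0 subrr.
by rewrite big_ord_recr /= mulrDr ih exprS; ring.
Qed.

Lemma fps_inv_ok (f : fpsR) : f 0%N != 0 -> (fps_inv f : fpsR) * f = 1.
Proof.
move=> hf; set c := f 0%N.
set g : fpsR := 1 - fconst c^-1 * f.
have hg : ordge 1 g.
  move=> i; rewrite ltnS leqn0 => /eqP ->.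
  by rewrite /g fpsEB fconstM fpsE1 mulVf // subrr.
have hfg : f = fconst c * (1 - g).
  by rewrite /g opprB addrC subrK mulrA fconst_mul divff // fconst1 mul1r.
apply: funext => n.
set G := \sum_(k < n.+1) g ^+ k.
have e1 : eqto n (fps_inv f : fpsR) (fconst c^-1 * G).
  move=> i hi; rewrite fconstM /G fps_sum_coef /fps_inv; congr (_ * _).
  have -> : fps_sub fps_one (fps_scale (f 0%N)^-1 f) = g by rewrite fps_scaleE.
  rewrite (big_ord_widen n.+1 (fun k => fps_pow g k i)) ?ltnS //.
  rewrite [RHS](bigID (fun k : 'I_n.+1 => (k < i.+1)%N)) /= [X in _ = _ + X]big1 ?addr0.
    by apply: eq_bigr => k _; rewrite fps_pow_exp.
  move=> k; rewrite -leqNgt => hk.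
  by rewrite (ordgeX (k:=k) hg) // mul1n.
have e2 := eqto_mul e1 (fun i _ => erefl (f i)).
have e3 : fconst c^-1 * G * f = (1 - g) * G.
  rewrite [in LHS]hfg.
  transitivity (fconst c^-1 * fconst c * ((1-g) * G)); first by ring.
  by rewrite fconst_mul mulVf // fconst1 mul1r.
rewrite (e2 n (leqnn n)) e3 geom fpsEB (ordgeX (k:=n.+1) hg) ?mul1n // subr0.
by [].
Qed.

Definition funit : {pred fpsR} := fun f => f 0%N != 0.
Definition finv (f : fpsR) : fpsR := if f 0%N != 0 then fps_inv f else f.

Lemma fmulV : {in funit, left_inverse 1 finv *%R}.
Proof. by move=> f hf; have hf' : f 0%N != 0 := hf; rewrite /finv hf' fps_inv_ok. Qed.
Lemma funitPl (x y : fpsR) : y * x = 1 -> funit x.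
Proof.
move=> /(congr1 (fun h : fpsR => h 0%N)); rewrite fpsM0 fpsE1 /= => e.
have : x 0%N != 0 by apply/eqP => h; move: e; rewrite h mulr0 => /eqP; rewrite eq_sym oner_eq0.
by [].
Qed.
Lemma finv_out : {in [predC funit], finv =1 id}.
Proof. move=> f; rewrite inE => h; rewrite /finv; have -> : (f 0%N != 0) = false := negbTE h; done. Qed.

HB.instance Definition _ := GRing.ComNzRing_hasMulInverse.Build fpsR fmulV funitPl finv_out.

Lemma unitfpsE (f : fpsR) : (f \is a GRing.unit) = (f 0%N != 0).
Proof. by []. Qed.

Lemma fps_divE (f g : fpsR) : g 0%N != 0 -> (fps_div f g : fpsR) = f / g.
Proof. by move=> hg; rewrite /fps_div /GRing.inv /= /finv hg. Qed.


Notation qx k := (qX k : fpsR).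
Notation qp n := (qpoch n : fpsR).
Notation Q k := (1 - qx k).

Lemma qpochE n : qp n = \prod_(k < n) Q k.+1.
Proof.
rewrite /qpoch -[fps_one]/(1 : fpsR) -[fps_mul]/(@GRing.mul fpsR).
by rewrite foldrE big_map -(big_mkord xpredT (fun k => Q k.+1)) /index_iota subn0.
Qed.

Lemma qpochS n : qp n.+1 = qp n * Q n.+1.
Proof. by rewrite !qpochE big_ord_recr. Qed.
Lemma qpoch0 : qp 0 = 1.
Proof. by rewrite qpochE big_ord0. Qed.

Lemma Q0 k : (0 < k)%N -> (Q k) 0%N = 1.
Proof. by move=> hk; rewrite fpsEB fpsE1 qXE; case: k hk. Qed.
Lemma Qunit k : (0 < k)%N -> Q k \is a GRing.unit.
Proof. by move=> hk; rewrite unitfpsE Q0 // oner_eq0. Qed.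

Lemma qpoch_0 n : qp n 0%N = 1.
Proof.
elim: n => [|n ih]; first by rewrite qpoch0.
by rewrite qpochS fpsM0 ih Q0 // mulr1.
Qed.
Lemma qpoch_unit n : qp n \is a GRing.unit.
Proof. by rewrite unitfpsE qpoch_0 oner_eq0. Qed.

Lemma eqto_qpoch n N : (n <= N)%N -> eqto n (qp N) (qp n).
Proof.
elim: N => [|N ih]; first by rewrite leqn0 => /eqP ->.
rewrite leq_eqVlt => /orP [/eqP -> //| hn].
move=> i hi; rewrite -ih // qpochS mulrBr mulr1 fpsEB.
by rewrite (ordgeMl _ (@ordge_qX N.+1)) ?subr0 //; apply: leq_ltn_trans hi _.
Qed.

Definition P : fpsR := qpoch_inf.

Lemma eqto_P n N : (n <= N)%N -> eqto n P (qp N).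
Proof.
move=> hN i hi; rewrite /P /qpoch_inf (eqto_qpoch (leq_trans hi hN)) //.
Qed.
Lemma P_unit : P \is a GRing.unit.
Proof. by rewrite unitfpsE /P /qpoch_inf qpoch_0 oner_eq0. Qed.

Lemma eqto_inv n (f g : fpsR) : f \is a GRing.unit -> g \is a GRing.unit ->
  eqto n f g -> eqto n f^-1 g^-1.
Proof.
move=> hf hg h; apply: eqto_ordge.
have -> : f^-1 - g^-1 = f^-1 * g^-1 * (g - f).
  have -> : f^-1 * g^-1 * (g - f) = f^-1 * (g^-1 * g) - (f^-1 * f) * g^-1 by ring.
  by rewrite !mulVr // mulr1 mul1r.
by apply: ordgeMl; apply: ordge_eqto => i hi; rewrite h.
Qed.

Definition u (n : nat) : fpsR := (qp n)^-1.
Lemma u0 : u 0 = 1. Proof. by rewrite /u qpoch0 invr1. Qed.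
Lemma uS n : u n = Q n.+1 * u n.+1.
Proof. by rewrite /u qpochS invrM ?qpoch_unit ?Qunit // mulrA divrr ?Qunit // mul1r. Qed.

Definition ssum (F : nat -> fpsR) : fpsR := fun n => \sum_(d < n.+1) F d n.
Definition good (F : nat -> fpsR) := forall d, ordge d (F d).

Lemma ssum_trunc F n N : good F -> (n < N)%N -> ssum F n = (\sum_(d < N) F d) n.
Proof.
move=> hF hN; rewrite fps_sum_coef /ssum.
rewrite (big_ord_widen N (fun d => F d n)) // [RHS](bigID (fun d : 'I_N => (d < n.+1)%N)) /=.
rewrite [X in _ = _ + X]big1 ?addr0 // => d; rewrite -leqNgt => hd; exact: hF.
Qed.

Lemma ssumD F G : ssum (fun d => F d + G d) = ssum F + ssum G.
Proof. by apply: funext => n; rewrite fpsED /ssum -big_split. Qed.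
Lemma ssum_ext F G : (forall d, F d = G d) -> ssum F = ssum G.
Proof. by move=> h; apply: funext => n; apply: eq_bigr => d _; rewrite h. Qed.

Lemma ssumMl (c : fpsR) F : good F -> ssum (fun d => c * F d) = c * ssum F.
Proof.
move=> hF; apply: funext => n.
have e : eqto n (ssum F) (\sum_(d < n.+1) F d) by move=> i hi; apply: ssum_trunc.
rewrite (eqto_mul (fun i _ => erefl (c i)) e (leqnn n)) mulr_sumr fps_sum_coef //.
Qed.

Lemma ssum_delta (c : fpsR) : ssum (fun d => if d == 0%N then c else 0) = c.
Proof. by apply: funext => n; rewrite /ssum big_ord_recl /= big1 ?addr0. Qed.

Lemma ssum_shift F m : good F -> (forall d, (d < m)%N -> F d = 0) ->
  ssum F = ssum (fun a => F (a + m)%N).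
Proof.
move=> hF h0; apply: funext => n; rewrite (@ssum_trunc F n (m + n.+1)) ?ltn_addl //.
rewrite big_split_ord /= big1 ?add0r => [|i _]; last by rewrite h0.
rewrite fps_sum_coef; apply: eq_bigr => i _ /=; by rewrite addnC.
Qed.

Lemma good_qX (a : nat -> nat) (G : nat -> fpsR) : (forall d, (d <= a d)%N) ->
  good (fun d => qx (a d) * G d).
Proof. by move=> ha d; apply: ordgeMr; apply: (ordge_le (ha d)); apply: ordge_qX. Qed.


Definition rr (M d : nat) : fpsR := \prod_(M.+1 - d <= j < M.+1) Q j.

Lemma rr0 M : rr M 0 = 1.
Proof. by rewrite /rr subn0 big_geq. Qed.
Lemma rr_top M : rr M M.+1 = 0.
Proof. by rewrite /rr subnn big_nat_recl // qX0 subrr mul0r. Qed.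
Lemma rrS1 M e : rr M.+1 e.+1 = rr M e * Q M.+1.
Proof. by rewrite /rr subSS big_nat_recr //= leq_subr. Qed.
Lemma rrS2 M e : (e <= M)%N -> rr M e.+1 = Q (M - e) * rr M e.
Proof.
move=> he; rewrite /rr big_ltn; last by lia.
by have -> : (M.+1 - e.+1).+1 = (M.+1 - e)%N by lia.
Qed.
Lemma rr_pascal M e : (e <= M)%N ->
  rr M.+1 e.+1 = qx e.+1 * rr M e.+1 + Q e.+1 * rr M e.
Proof.
move=> he; rewrite rrS1 rrS2 //.
have -> : qx M.+1 = qx e.+1 * qx (M - e) by rewrite -qXD; congr qX; lia.
ring.
Qed.

Definition fk k M : fpsR := \sum_(d < M.+1) qx (d * (d + k)) * rr M d * u d * u (d + k).

Lemma fin_durfee M k : fk k M = u (M + k).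
Proof.
elim: M k => [|M ih] k.
  by rewrite /fk big_ord_recl big_ord0 /= rr0 u0 qX0 addr0 !mul1r.
rewrite addSnnS -ih /fk.
set A := fun d : nat => qx (d * (d + k.+1)) * rr M d * u d * u (d + k.+1).
set B := fun d : nat => qx (d * (d + k.+1) + (d + k.+1)) * rr M d * u d * u (d + k.+1).
have hA : A M.+1 = 0 by rewrite /A rr_top mulr0 !mul0r.
have hB : B M.+1 = 0 by rewrite /B rr_top mulr0 !mul0r.
have eA : \sum_(d < M.+1) qx (d * (d + k.+1)) * rr M d * u d * u (d + k.+1)
          = \sum_(d < M.+2) A d.
  by rewrite [RHS]big_ord_recr /= hA addr0.
have eB : \sum_(d < M.+2) B d = \sum_(d < M.+1) B d.
  by rewrite [LHS]big_ord_recr /= hB addr0.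
have eT : forall d : 'I_M.+2,
  qx (d * (d + k)) * rr M.+1 d * u d * u (d + k) =
  A d - B d + (if val d is e.+1 then B e else 0).
  case=> [[|e] he] /=.
    rewrite /A /B /= !rr0 !u0 !mul0n !add0n qX0 (uS k); ring.
  rewrite rr_pascal; last by lia.
  rewrite /A /B /=.
  have -> : (e.+1 * (e.+1 + k.+1) + (e.+1 + k.+1) = e.+1 * (e.+1 + k) + e.+1 + (e.+1 + k).+1)%N by lia.
  have -> : (e.+1 * (e.+1 + k.+1) = e.+1 * (e.+1 + k) + e.+1)%N by lia.
  have -> : (e * (e + k.+1) + (e + k.+1) = e.+1 * (e.+1 + k))%N by lia.
  have -> : (e.+1 + k.+1 = (e.+1 + k).+1)%N by lia.
  have -> : (e + k.+1 = e.+1 + k)%N by lia.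
  rewrite (uS e) (uS (e.+1 + k)) !qXD; ring.
rewrite (eq_bigr _ (fun d _ => eT d)) big_split /= [X in _ + X]big_ord_recl /= add0r.
by rewrite sumrB eA eB subrK.
Qed.


Lemma ordge_1prod a (r : seq nat) (F : nat -> fpsR) :
  (forall i, i \in r -> ordge a (1 - F i)) -> ordge a (1 - \prod_(i <- r) F i).
Proof.
move=> h; rewrite big_seq; elim/big_rec: _ => [|i x Pi hx]; first by rewrite subrr.
have -> : 1 - F i * x = (1 - F i) + F i * (1 - x) by ring.
by apply: ordgeD; [apply: h | apply: ordgeMl].
Qed.

Lemma ordge_rr M d : ordge (M.+1 - d) (1 - rr M d).
Proof.
apply: ordge_1prod => j; rewrite mem_index_iota => /andP [h1 _].
have -> : 1 - Q j = qx j by ring.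
exact: (ordge_le h1 (@ordge_qX j)).
Qed.

Definition dt k d : fpsR := qx (d * (d + k)) * u d * u (d + k).
Definition ek k d : fpsR := qx (d * (d + k)) * u d * u (d + k).+1.

Lemma dd_le d k : (d <= d * (d + k))%N.
Proof. by case: d => // d; rewrite leq_pmulr. Qed.

Lemma good_dt k : good (dt k).
Proof. move=> d; rewrite /dt -mulrA; exact: (@good_qX (fun d => d * (d + k))%N (fun d => u d * u (d + k)) (fun d => dd_le d k) d). Qed.
Lemma good_ek k : good (ek k).
Proof. move=> d; rewrite /ek -mulrA; exact: (@good_qX (fun d => d * (d + k))%N (fun d => u d * u (d + k).+1) (fun d => dd_le d k) d). Qed.

Lemma durfee k : ssum (dt k) = P^-1.
Proof.
apply: funext => n.
rewrite (@ssum_trunc _ n n.+1) ?good_dt //.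
have e1 : eqto n (\sum_(d < n.+1) dt k d) (fk k n).
  apply: eqto_ordge; rewrite /fk -sumrB; apply: ordge_sum => d _.
  have -> : dt k d - qx (d * (d + k)) * rr n d * u d * u (d + k)
            = qx (d * (d + k)) * (1 - rr n d) * (u d * u (d + k)) by rewrite /dt; ring.
  have hh := ordgeM (@ordge_qX (d * (d + k))) (@ordge_rr n d).
  apply: ordgeMr => i hi; apply: hh.
  have := dd_le d k; have := ltn_ord d; lia.
rewrite e1 // fin_durfee.
apply: (@eqto_inv n (qp (n + k)) P (qpoch_unit _) P_unit); last by [].
by move=> i hi; rewrite (@eqto_P n (n + k) (leq_addr k n) i hi).
exact: good_dt.
Qed.

Lemma durfeeE k : ssum (ek k) = (1 + qx k.+1) * P^-1.
Proof.
have h : forall d, ek k d = dt k d + qx k.+1 * dt k.+1 d.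
  move=> d; rewrite /ek /dt (uS (d + k)) addnS.
  have -> : (d * (d + k).+1 = d * (d + k) + d)%N by lia.
  have -> : qx (d * (d + k) + d) = qx (d * (d + k)) * qx d by rewrite qXD.
  have -> : qx (d + k).+1 = qx d * qx k.+1 by rewrite -qXD addnS.
  ring.
rewrite (ssum_ext h) ssumD ssumMl; last exact: good_dt.
rewrite (_ : ssum (fun d => dt k d) = P^-1); last exact: durfee.
rewrite (_ : ssum (fun d => dt k.+1 d) = P^-1); last exact: durfee.
ring.
Qed.


Definition z : fpsR := qX 1.
Lemma qXpow n : qx n = z ^+ n.
Proof. elim: n => [|n ih]; first by rewrite qX0 expr0. by rewrite qXS ih exprSr. Qed.

Lemma binS2 m : 'C(m.+1, 2) = ('C(m, 2) + m)%N.
Proof. by rewrite binS bin1 addnC. Qed.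

Definition Tg (f : nat -> nat) m d : fpsR :=
  if (m <= d)%N then qx (f d + 'C(m, 2)) * Q m * (Q d)^-1 * u (d + m) * u (d - m) else 0.
Definition Rg (f : nat -> nat) m d : fpsR :=
  if (m <= d)%N then qx (f d + 'C(m, 2)) * Q (m + m).+1 * u (d - m) * u (d + m).+1 else 0.

Lemma rec_g f m d : (1 <= m)%N -> Tg f m d + Tg f m.+1 d = Rg f m d.
Proof.
move=> hm; rewrite /Tg /Rg; case: (ltnP d m) => hdm.
  by rewrite !ifF ?addr0 //; apply/negbTE; rewrite -ltnNge // ltnS ltnW.
rewrite leq_eqVlt in hdm; case/orP: hdm => [/eqP ed | hlt].
  subst d; rewrite ifF ?addr0; last by apply/negbTE; rewrite -ltnNge.
  rewrite subnn (uS (m + m)) mulrK ?Qunit //.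
  ring.
rewrite hlt.
have [a ->] : exists a, d = (m.+1 + a)%N by exists (d - m.+1)%N; lia.
have hw : Q (m.+1 + a) * (Q (m.+1 + a))^-1 = 1 by rewrite divrr ?Qunit.
have -> : (m.+1 + a - m = a.+1)%N by lia.
have -> : (m.+1 + a - m.+1 = a)%N by lia.
have -> : (m.+1 + a + m.+1 = (m.+1 + a + m).+1)%N by lia.
rewrite binS2 addnA (uS a) (uS (m.+1 + a + m)).
set w := (Q (m.+1 + a))^-1.
have e : forall Z : fpsR, Z = Q (m.+1 + a) * w * Z by move=> Z; rewrite hw mul1r.
rewrite [RHS]e.
have q0 : qx (f (m.+1 + a)%N + 'C(m, 2) + m) = qx (f (m.+1 + a)%N + 'C(m, 2)) * qx m by rewrite qXD.
have q1 : qx m.+1 = z^+1 * z^+m by rewrite qXpow -exprD; congr (_ ^+ _); lia.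
have q2 : qx (m.+1 + a) = z^+1 * z^+m * z^+a by rewrite qXpow -!exprD; congr (_ ^+ _); lia.
have q3 : qx (m.+1 + a + m).+1 = z^+2 * z^+m * z^+m * z^+a by rewrite qXpow -!exprD; congr (_ ^+ _); lia.
have q4 : qx (m + m).+1 = z^+1 * z^+m * z^+m by rewrite qXpow -!exprD; congr (_ ^+ _); lia.
have q5 : qx a.+1 = z^+1 * z^+a by rewrite qXpow -!exprD; congr (_ ^+ _); lia.
have q6 : qx m = z^+m by rewrite qXpow.
rewrite q0 q1 q2 q3 q4 q5 q6.
ring.
Qed.


Lemma bin2x l : ('C(l, 2) * 2 = l * (l - 1))%N.
Proof. elim: l => [|l ih] //; rewrite binS2; nia. Qed.

Lemma e1E l : ((l * (3 * l + 1))./2 = l ^ 2 + l + 'C(l, 2))%N.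
Proof.
have h := bin2x l.
have -> : (l * (3 * l + 1) = (l ^ 2 + l + 'C(l, 2)).*2)%N by rewrite -mul2n; nia.
by rewrite doubleK.
Qed.
Lemma e2E l : ((l * (3 * l - 1))./2 = l ^ 2 + 'C(l, 2))%N.
Proof.
have h := bin2x l.
have -> : (l * (3 * l - 1) = (l ^ 2 + 'C(l, 2)).*2)%N by rewrite -mul2n; nia.
by rewrite doubleK.
Qed.

Definition f1 d := (d ^ 2 + d)%N.
Definition f2 d := (d ^ 2)%N.

Lemma good_Tg f m : (forall d, d <= f d)%N -> good (Tg f m).
Proof.
move=> hf d; rewrite /Tg; case: ifP => _ //.
rewrite -!mulrA; apply: ordgeMr => i hi; apply: (@ordge_qX (f d + 'C(m, 2))%N).
by apply: leq_trans hi _; apply: leq_trans (hf d) (leq_addr _ _).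
Qed.
Lemma good_Rg f m : (forall d, d <= f d)%N -> good (Rg f m).
Proof.
move=> hf d; rewrite /Rg; case: ifP => _ //.
rewrite -!mulrA; apply: ordgeMr => i hi; apply: (@ordge_qX (f d + 'C(m, 2))%N).
by apply: leq_trans hi _; apply: leq_trans (hf d) (leq_addr _ _).
Qed.
Lemma f1_ge d : (d <= f1 d)%N. Proof. rewrite /f1; lia. Qed.
Lemma f2_ge d : (d <= f2 d)%N. Proof. rewrite /f2; nia. Qed.

Lemma sum_rec f m : (1 <= m)%N -> ssum (Tg f m) + ssum (Tg f m.+1) = ssum (Rg f m).
Proof. by move=> hm; rewrite -ssumD; apply: ssum_ext => d; apply: rec_g. Qed.

Lemma Rg1_sum m : ssum (Rg f1 m) = qx (m ^ 2 + m + 'C(m, 2)) * Q (m + m).+1 * P^-1.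
Proof.
rewrite (@ssum_shift _ m (good_Rg m f1_ge)); last first.
  by move=> d hd; rewrite /Rg ifF //; apply/negbTE; rewrite -ltnNge.
rewrite -(durfee (m + m).+1) -ssumMl; last exact: good_dt.
apply: ssum_ext => a.
rewrite /Rg /dt leq_addl /f1.
have -> : ((a + m) ^ 2 + (a + m) + 'C(m, 2) = (m ^ 2 + m + 'C(m, 2)) + a * (a + (m + m).+1))%N by nia.
have -> : (a + m - m = a)%N by lia.
have -> : (a + m + m = a + (m + m))%N by lia.
rewrite qXD addnS; ring.
Qed.

Lemma Rg2_sum m : ssum (Rg f2 m) = qx (m ^ 2 + 'C(m, 2)) * Q (m + m).+1 * (1 + qx (m + m).+1) * P^-1.
Proof.
rewrite (@ssum_shift _ m (good_Rg m f2_ge)); last first.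
  by move=> d hd; rewrite /Rg ifF //; apply/negbTE; rewrite -ltnNge.
rewrite -mulrA -(durfeeE (m + m)) -ssumMl; last exact: good_ek.
apply: ssum_ext => a.
rewrite /Rg /ek leq_addl /f2.
have -> : ((a + m) ^ 2 + 'C(m, 2) = (m ^ 2 + 'C(m, 2)) + a * (a + (m + m)))%N by nia.
have -> : (a + m - m = a)%N by lia.
have -> : (a + m + m = a + (m + m))%N by lia.
rewrite qXD; ring.
Qed.


Lemma base1 : Q 1 / P = 1 + ssum (Tg f1 1).
Proof.
have h : forall d, Q 1 * dt 1 d = Tg f1 1 d + (if d == 0%N then 1 else 0).
  case=> [|e].
    by rewrite /Tg /dt /= mul0n qX0 add0n u0 !mul1r -(uS 0) u0 add0r.
  rewrite /Tg /dt /f1 /= addr0 subn1 /= (uS e).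
  set w := (Q e.+1)^-1.
  have hw : w * Q e.+1 = 1 by rewrite mulVr ?Qunit.
  have ee : forall Z : fpsR, Z = (w * Q e.+1) * Z by move=> Z; rewrite hw mul1r.
  rewrite [LHS]ee.
  have -> : (e.+1 ^ 2 + e.+1 + 'C(1, 2) = e.+1 * (e.+1 + 1))%N by rewrite bin_small //; lia.
  ring.
rewrite -(durfee 1) -ssumMl; last exact: good_dt.
transitivity (ssum (fun d => Tg f1 1 d + (if d == 0%N then 1 else 0))).
  by apply: ssum_ext => d; exact: h d.
by rewrite ssumD ssum_delta addrC.
Qed.

Lemma base2 : Q 2 / P = 1 + ssum (Tg f2 1).
Proof.
have h : forall d, Q 1 * ek 0 d = Tg f2 1 d + (if d == 0%N then 1 else 0).
  case=> [|e].
    by rewrite /Tg /ek /= mul0n qX0 u0 !mul1r -(uS 0) u0 add0r.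
  rewrite /Tg /ek /f2 /= addr0 subn1 /= (uS e).
  set w := (Q e.+1)^-1.
  have hw : w * Q e.+1 = 1 by rewrite mulVr ?Qunit.
  have ee : forall Z : fpsR, Z = (w * Q e.+1) * Z by move=> Z; rewrite hw mul1r.
  rewrite [LHS]ee.
  have -> : (e.+1 ^ 2 + 'C(1, 2) = e.+1 * (e.+1 + 0))%N by rewrite bin_small //; lia.
  have -> : (e.+1 + 0).+1 = (e.+1 + 1)%N by lia.
  ring.
have -> : Q 2 = Q 1 * (1 + qx 1) by rewrite (qXD 1 1); ring.
rewrite -mulrA -(durfeeE 0) -ssumMl; last exact: good_ek.
transitivity (ssum (fun d => Tg f2 1 d + (if d == 0%N then 1 else 0))).
  by apply: ssum_ext => d; exact: h d.
by rewrite ssumD ssum_delta addrC.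
Qed.


Definition c1 l : fpsR := qx (l ^ 2 + l + 'C(l, 2)) * Q (2 * l + 1).
Definition c2 l : fpsR := qx (l ^ 2 + 'C(l, 2)) * Q (4 * l + 2).

Lemma c1_rec m : (1 <= m)%N -> c1 m / P = ssum (Tg f1 m) + ssum (Tg f1 m.+1).
Proof.
move=> hm; rewrite sum_rec // Rg1_sum /c1.
by have -> : (2 * m + 1 = (m + m).+1)%N by lia.
Qed.

Lemma c2_rec m : (1 <= m)%N -> c2 m / P = ssum (Tg f2 m) + ssum (Tg f2 m.+1).
Proof.
move=> hm; rewrite sum_rec // Rg2_sum /c2.
have -> : (4 * m + 2 = (m + m).+1 + (m + m).+1)%N by lia.
by rewrite (qXD (m + m).+1 (m + m).+1); ring.
Qed.

Lemma main1 m : (\sum_(l < m.+1) (-1) ^+ l * c1 l) / P = 1 + (-1) ^+ m * ssum (Tg f1 m.+1).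
Proof.
elim: m => [|m ih].
  rewrite big_ord_recr big_ord0 /= add0r expr0 !mul1r /c1.
  have -> : (0 ^ 2 + 0 + 'C(0, 2) = 0)%N by [].
  by rewrite qX0 mul1r base1.
rewrite big_ord_recr /= mulrDl ih -mulrA c1_rec // exprS; ring.
Qed.

Lemma main2 m : (\sum_(l < m.+1) (-1) ^+ l * c2 l) / P = 1 + (-1) ^+ m * ssum (Tg f2 m.+1).
Proof.
elim: m => [|m ih].
  rewrite big_ord_recr big_ord0 /= add0r expr0 !mul1r /c2.
  have -> : (0 ^ 2 + 'C(0, 2) = 0)%N by [].
  by rewrite qX0 mul1r base2.
rewrite big_ord_recr /= mulrDl ih -mulrA c2_rec // exprS; ring.
Qed.


Lemma fconst_sign l : fconst ((-1) ^+ l) = (-1) ^+ l.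
Proof.
elim: l => [|l ih]; first by rewrite !expr0 fconst1.
rewrite !exprS -ih -fconst_mul; congr (_ * _).
by apply: funext => n; rewrite fpsEN fpsE1 /fconst /fps_const; case: n => [|n] //=; rewrite oppr0.
Qed.

Lemma fps_bigsumE F N : (fps_bigsum F N : fpsR) = \sum_(i < N) (F i : fpsR).
Proof. by apply: funext => n; rewrite fps_sum_coef. Qed.

Lemma qp_nz n : (qpoch n : fpsR) 0%N != 0.
Proof. by rewrite qpoch_0 oner_eq0. Qed.
Lemma Q_nz d : (0 < d)%N -> (Q d) 0%N != 0.
Proof. by move=> hd; rewrite Q0 // oner_eq0. Qed.
Lemma qp2_nz a b : ((qpoch a : fpsR) * qpoch b) 0%N != 0.
Proof. by rewrite fpsM0 !qpoch_0 mulr1 oner_eq0. Qed.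

Lemma lhs1E m : (lhs1 m : fpsR) = (\sum_(l < m) (-1) ^+ l * c1 l) / P.
Proof.
rewrite /lhs1 fps_divE; last by rewrite /qpoch_inf qpoch_0 oner_eq0.
rewrite fps_bigsumE; congr (_ / _); apply: eq_bigr => l _.
by rewrite fps_scaleE fconst_sign /c1 e1E.
Qed.

Lemma lhs2E m : (lhs2 m : fpsR) = (\sum_(l < m) (-1) ^+ l * c2 l) / P.
Proof.
rewrite /lhs2 fps_divE; last by rewrite /qpoch_inf qpoch_0 oner_eq0.
rewrite fps_bigsumE; congr (_ / _); apply: eq_bigr => l _.
by rewrite fps_scaleE fconst_sign /c2 e2E.
Qed.

Lemma termgE (t : nat -> nat -> fps) f m d : (1 <= m)%N ->
  (forall m d, t m d = fps_mul (fps_div (qX (f d + 'C(m, 2))) (qpoch (2 * d)))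
    (fps_mul (fps_div (fps_sub fps_one (qX m)) (fps_sub fps_one (qX d)))
             (qbinom (2 * d) (d + m)))) ->
  (t m d : fpsR) = Tg f m d.
Proof.
move=> hm ht; rewrite ht /qbinom /Tg; case: (leqP m d) => h.
  have -> : (d + m <= 2 * d)%N by lia.
  have hd : (0 < d)%N by lia.
  rewrite (fps_divE _ (qp_nz _)) (fps_divE _ (Q_nz hd)) (fps_divE _ (qp2_nz _ _)).
  have -> : (2 * d - (d + m) = d - m)%N by lia.
  rewrite /u invrM ?qpoch_unit //.
  set A := qp (2 * d).
  have hA : A^-1 * A = 1 by rewrite mulVr ?qpoch_unit.
  have ee : forall Z : fpsR, Z = (A^-1 * A) * Z by move=> Z; rewrite hA mul1r.
  rewrite [RHS]ee.
  change (qx (f d + 'C(m, 2)) / A * (Q m / Q d * (A * ((qp (d - m))^-1 * (qp (d + m))^-1))) =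
    A^-1 * A * (qx (f d + 'C(m, 2)) * Q m * (Q d)^-1 * (qp (d + m))^-1 * (qp (d - m))^-1)).
  ring.
have -> : (d + m <= 2 * d)%N = false by lia.
apply: funext => n; rewrite /fps_mul big1 // => i _.
by rewrite big1 ?mulr0 // => j _; rewrite mulr0.
Qed.

Lemma term1E m d : (1 <= m)%N -> (term1 m d : fpsR) = Tg f1 m d.
Proof. by move=> hm; apply: termgE. Qed.
Lemma term2E m d : (1 <= m)%N -> (term2 m d : fpsR) = Tg f2 m d.
Proof. by move=> hm; apply: termgE. Qed.

Lemma series_g (t : nat -> nat -> fps) f m : (1 <= m)%N -> (forall d, d <= f d)%N ->
  (forall d, (t m d : fpsR) = Tg f m d) ->
  fps_series (fun d => t m d.+1) (ssum (Tg f m)).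
Proof.
move=> hm hf ht n; exists n => M hM.
rewrite (@ssum_trunc _ n M.+1) ?ltnS //; last exact: good_Tg.
rewrite fps_sum_coef big_ord_recl /= /Tg ifF; last by apply/negbTE; rewrite -ltnNge.
rewrite add0r /fps_bigsum; apply: eq_bigr => i _; by rewrite ht.
Qed.


Theorem corollary1p3 (m : nat) (hm : (1 <= m)%N) :
  (exists S : fps, fps_series (fun d => term1 m d.+1) S /\
     lhs1 m = fps_add fps_one (fps_scale ((-1) ^+ (m - 1)) S)) /\
  (exists S : fps, fps_series (fun d => term2 m d.+1) S /\
     lhs2 m = fps_add fps_one (fps_scale ((-1) ^+ (m - 1)) S)).
Proof.
case: m hm => [//|m] hm; split.
  exists (ssum (Tg f1 m.+1)); split.
    by apply: series_g => //; [exact: f1_ge | move=> d; exact: term1E].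
  change ((lhs1 m.+1 : fpsR) = 1 + (fps_scale ((-1) ^+ (m.+1 - 1)) (ssum (Tg f1 m.+1)) : fpsR)).
  by rewrite lhs1E main1 fps_scaleE fconst_sign subn1.
exists (ssum (Tg f2 m.+1)); split.
  by apply: series_g => //; [exact: f2_ge | move=> d; exact: term2E].
change ((lhs2 m.+1 : fpsR) = 1 + (fps_scale ((-1) ^+ (m.+1 - 1)) (ssum (Tg f2 m.+1)) : fpsR)).
by rewrite lhs2E main2 fps_scaleE fconst_sign subn1.
Qed.
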